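(* There is an absolute constant $K$ such that for all real random variables $X,Y$ with bounded ranges (not necessarily independent) and all $n\in\mathbb{N}$, $$H_n(X-Y)\le 3H_n(X+Y)+4H_n(X)+4H_n(Y)-5H_n(X,Y)+K.$$
   Context: Logarithms base 2. $D_n(x)=\lfloor 2^nx\rfloor/2^n$ coordinatewise. For bounded random variables, $H_n(Z):=H(D_n(Z))$ and $H_n(X,Y):=H(D_n(X),D_n(Y))$, where $H$ is Shannon entropy of a discrete random variable. *)

(* Defs.v *)
From HB Require Import structures.
From mathcomp Require Import all_boot all_order all_algebra.
From mathcomp Require Import all_classical all_reals all_analysis.
Set Implicit Arguments. Unset Strict Implicit. Unset Printing Implicit Defensive.
Import Order.TTheory GRing.Theory Num.Theory.
Local Open Scope classical_set_scope.
Local Open Scope ring_scope.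

Definition log2 {R : realType} (x : R) : R := ln x / ln 2.

Definition dyadic {R : realType} (n : nat) (x : R) : R :=
  (Num.floor (2 ^+ n * x))%:~R / 2 ^+ n.

Definition pmf {R : realType} {d} {T : measurableType d} {V : Type}
  (P : probability T R) (Z : T -> V) (v : V) : R :=
  fine (P (Z @^-1` [set v])).

Definition entropy {R : realType} {d} {T : measurableType d} {V : choiceType}
  (P : probability T R) (Z : T -> V) : R :=
  - \sum_(v \in range Z) (pmf P Z v * log2 (pmf P Z v)).

Definition Hn {R : realType} {d} {T : measurableType d}
  (P : probability T R) (n : nat) (Z : T -> R) : R :=
  entropy P (fun t => dyadic n (Z t)).

Definition Hn2 {R : realType} {d} {T : measurableType d}
  (P : probability T R) (n : nat) (X Y : T -> R) : R :=
  entropy P (fun t => (dyadic n (X t), dyadic n (Y t))).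

(* Main.v *)
Require Import Defs.
From HB Require Import structures.
From mathcomp Require Import all_boot all_order all_algebra.
From mathcomp Require Import all_classical all_reals all_analysis.
From mathcomp Require Import ring lra.
Set Implicit Arguments. Unset Strict Implicit. Unset Printing Implicit Defensive.
Import Order.TTheory GRing.Theory Num.Theory.
Local Open Scope classical_set_scope.
Local Open Scope ring_scope.

Section FinEnt.
Variable R : realType.
Variable O : finType.
Variable w : O -> R.
Hypothesis w0 : forall o, 0 <= w o.
Hypothesis w1 : \sum_o w o = 1.

Definition pm {V : eqType} (F : O -> V) (v : V) : R := \sum_o (F o == v)%:R * w o.
Definition Hl {V : eqType} (F : O -> V) : R := - \sum_o w o * ln (pm F (F o)).

Lemma pm_ge0 (V : eqType) (F : O -> V) v : 0 <= pm F v.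
Proof. by apply: sumr_ge0 => o _; apply: mulr_ge0 => //; apply: ler0n. Qed.

Lemma pm_ge_w (V : eqType) (F : O -> V) o : w o <= pm F (F o).
Proof.
rewrite /pm (bigD1 o) //= eqxx mul1r lerDl.
by apply: sumr_ge0 => o' _; apply: mulr_ge0 => //; apply: ler0n.
Qed.

Lemma pm_gt0 (V : eqType) (F : O -> V) o : 0 < w o -> 0 < pm F (F o).
Proof. by move=> h; apply: lt_le_trans h (pm_ge_w F o). Qed.

Lemma ln_le_sub1 (r : R) : 0 < r -> ln r <= r - 1.
Proof.
move=> r0; have := @le_ln1Dx R (r - 1).
rewrite [1 + _]addrC subrK; apply; lra.
Qed.

Lemma gibbs (r : O -> R) : (forall o, 0 < w o -> 0 < r o) ->
  \sum_o w o * ln (r o) <= \sum_o w o * r o - 1.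
Proof.
move=> rp; rewrite -w1 -sumrB; apply: ler_sum => o _.
have [->|wn0] := eqVneq (w o) 0; first by rewrite !mul0r subrr.
have wp : 0 < w o by rewrite lt_neqAle eq_sym wn0 w0.
rewrite -[X in _ <= _ - X]mulr1 -mulrBr; apply: ler_wpM2l => //.
exact: ln_le_sub1 (rp o wp).
Qed.

Lemma Hl_le_fun (V1 V2 : eqType) (F : O -> V1) (G : O -> V2) (f : V2 -> V1) :
  (forall o, 0 < w o -> F o = f (G o)) -> Hl F <= Hl G.
Proof.
move=> hF; rewrite /Hl lerN2; apply: ler_sum => o _.
have [->|wn0] := eqVneq (w o) 0; first by rewrite !mul0r.
have wp : 0 < w o by rewrite lt_neqAle eq_sym wn0 w0.
apply: ler_wpM2l => //; rewrite ler_ln ?posrE ?pm_gt0 //.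
apply: ler_sum => o' _.
have [->|wn0'] := eqVneq (w o') 0; first by rewrite !mulr0.
have wp' : 0 < w o' by rewrite lt_neqAle eq_sym wn0' w0.
case: eqP => [E|_]; last by rewrite mul0r mulr_ge0 // ler0n.
by rewrite hF // hF // E eqxx.
Qed.

Lemma Hl_eq_fun (V1 V2 : eqType) (F : O -> V1) (G : O -> V2) (f : V2 -> V1) (g : V1 -> V2) :
  (forall o, 0 < w o -> F o = f (G o)) -> (forall o, 0 < w o -> G o = g (F o)) -> Hl F = Hl G.
Proof. by move=> h1 h2; apply/eqP; rewrite eq_le (Hl_le_fun h1) (Hl_le_fun h2). Qed.

Lemma Hl_cst : Hl (fun _ : O => tt) = 0.
Proof.
have e : pm (fun _ : O => tt) tt = 1.
  by rewrite /pm; under eq_bigr do rewrite eqxx mul1r; exact: w1.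
by rewrite /Hl big1 ?oppr0 // => o _; rewrite e ln1 mulr0.
Qed.
End FinEnt.
Section Sub.
Variable R : realType.
Variable O : finType.
Variable w : O -> R.
Hypothesis w0 : forall o, 0 <= w o.
Hypothesis w1 : \sum_o w o = 1.

Lemma wpos o : w o != 0 -> 0 < w o.
Proof. by move=> h; rewrite lt_neqAle eq_sym h w0. Qed.

Lemma submod_inner (V1 V2 V3 : eqType) (F : O -> V1) (G : O -> V2) (C : O -> V3)
  (c1 : V1 -> V3) (c2 : V2 -> V3) :
  (forall o, C o = c1 (F o)) -> (forall o, C o = c2 (G o)) -> forall o1 o2,
  \sum_o (F o1 == F o)%:R * (G o2 == G o)%:R *
     (w o / (pm w (fun o => (F o, G o)) (F o, G o) * pm w C (C o)))
  <= (C o1 == C o2)%:R / pm w C (C o1).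
Proof.
move=> h1 h2 o1 o2.
case: (eqVneq (C o1) (C o2)) => Ce; last first.
  rewrite big1 ?mul0r // => o _.
  case: eqP => [E1|]; last by rewrite !mul0r.
  case: eqP => [E2|]; last by rewrite mulr0 mul0r.
  by move: Ce; rewrite h1 E1 h2 E2 -h1 -h2 eqxx.
set q := pm w (fun o => (F o, G o)) (F o1, G o2).
set p := pm w C (C o1).
have -> : \sum_o (F o1 == F o)%:R * (G o2 == G o)%:R *
     (w o / (pm w (fun o => (F o, G o)) (F o, G o) * pm w C (C o)))
   = (\sum_o (F o1 == F o)%:R * (G o2 == G o)%:R * w o) / (q * p).
  rewrite mulr_suml; apply: eq_bigr => o _.
  case: eqP => [E1|]; last by rewrite !mul0r.
  case: eqP => [E2|]; last by rewrite mulr0 !mul0r.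
  by rewrite /q /p -E1 -E2 h1 -E1 -h1 mulrA.
have -> : \sum_o (F o1 == F o)%:R * (G o2 == G o)%:R * w o = q.
  rewrite /q /pm; apply: eq_bigr => o _.
  rewrite xpair_eqE (eq_sym (F o)) (eq_sym (G o)).
  by case: (F o1 == F o); case: (G o2 == G o); rewrite /= ?mul1r ?mul0r.
have p0 : 0 <= p by apply: pm_ge0.
have [->|qn0] := eqVneq q 0; first by rewrite mul0r divr_ge0 ?ler0n.
by rewrite invfM mulrA mulfV // mul1r.
Qed.

Lemma Hl_submod (V1 V2 V3 : eqType) (F : O -> V1) (G : O -> V2) (C : O -> V3)
  (c1 : V1 -> V3) (c2 : V2 -> V3) :
  (forall o, C o = c1 (F o)) -> (forall o, C o = c2 (G o)) ->
  Hl w (fun o => (F o, G o)) + Hl w C <= Hl w F + Hl w G.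
Proof.
move=> h1 h2.
set FG := fun o => (F o, G o).
pose r o := pm w F (F o) * pm w G (G o) / (pm w FG (FG o) * pm w C (C o)).
have key : Hl w FG + Hl w C - (Hl w F + Hl w G) = \sum_o w o * ln (r o).
  rewrite /Hl.
  have -> : \sum_o w o * ln (r o) = \sum_o (w o * ln (pm w F (F o)) + w o * ln (pm w G (G o))
      - w o * ln (pm w FG (FG o)) - w o * ln (pm w C (C o))).
    apply: eq_bigr => o _.
    have [->|wn0] := eqVneq (w o) 0; first by rewrite !mul0r !subr0 addr0.
    have wp := wpos wn0.
    have a1 := pm_gt0 w0 F wp; have a2 := pm_gt0 w0 G wp.
    have a3 := pm_gt0 w0 FG wp; have a4 := pm_gt0 w0 C wp.
    rewrite /r ln_div ?posrE ?mulr_gt0 // !lnM ?posrE //; ring.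
  rewrite !sumrB big_split /=; lra.
have pos : forall o, 0 < w o -> 0 < r o.
  move=> o wp; rewrite /r divr_gt0 // mulr_gt0 //; exact: pm_gt0.
have bound : \sum_o w o * r o <= 1.
  pose D o := w o / (pm w FG (FG o) * pm w C (C o)).
  have -> : \sum_o w o * r o = \sum_o1 \sum_o2 (w o1 * w o2) *
      \sum_o (F o1 == F o)%:R * (G o2 == G o)%:R * D o.
    have -> : \sum_o w o * r o = \sum_o \sum_o1 \sum_o2
        ((F o1 == F o)%:R * w o1) * ((G o2 == G o)%:R * w o2) * D o.
      apply: eq_bigr => o _.
      transitivity ((pm w F (F o) * pm w G (G o)) * D o); first by rewrite /r /D; ring.
      rewrite /pm !mulr_suml; apply: eq_bigr => o1 _.
      rewrite mulr_sumr mulr_suml; apply: eq_bigr => o2 _.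
      ring.
    rewrite exchange_big; apply: eq_bigr => o1 _.
    rewrite exchange_big; apply: eq_bigr => o2 _.
    rewrite mulr_sumr; apply: eq_bigr => o _; ring.
  apply: (@le_trans _ _ (\sum_o1 \sum_o2 (w o1 * w o2) *
      ((C o1 == C o2)%:R / pm w C (C o1)))).
    apply: ler_sum => o1 _; apply: ler_sum => o2 _.
    apply: ler_wpM2l; first by rewrite mulr_ge0.
    exact: (submod_inner h1 h2).
  rewrite -[X in _ <= X]w1; apply: ler_sum => o1 _.
  have -> : \sum_o2 w o1 * w o2 * ((C o1 == C o2)%:R / pm w C (C o1))
      = w o1 / pm w C (C o1) * pm w C (C o1).
    rewrite /pm mulr_sumr; apply: eq_bigr => o2 _; rewrite (eq_sym (C o2)); ring.
  have [->|pn0] := eqVneq (pm w C (C o1)) 0; first by rewrite mulr0.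
  by rewrite divfK.
have := gibbs w0 w1 pos; lra.
Qed.

Lemma Hl_subadd (V1 V2 : eqType) (F : O -> V1) (G : O -> V2) :
  Hl w (fun o => (F o, G o)) <= Hl w F + Hl w G.
Proof.
have := @Hl_submod _ _ _ F G (fun _ => tt) (fun _ => tt) (fun _ => tt) (fun _ => erefl) (fun _ => erefl).
by rewrite Hl_cst // addr0.
Qed.

Lemma divff_le1 (x : R) : x / x <= 1.
Proof. by have [->|xn0] := eqVneq x 0; rewrite ?mulr0 ?ler01 // divff. Qed.

Lemma Hl_bool (F : O -> bool) : Hl w F <= ln 2.
Proof.
pose r o := (2 * pm w F (F o))^-1.
have pos : forall o, 0 < w o -> 0 < r o.
  by move=> o wp; rewrite /r invr_gt0 mulr_gt0 //; exact: pm_gt0.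
have e : \sum_o w o * ln (r o) = Hl w F - ln 2.
  rewrite /Hl -[ln 2]mulr1 -[X in ln 2 * X]w1 mulr_sumr -sumrN -sumrB; apply: eq_bigr => o _.
  have [->|wn0] := eqVneq (w o) 0; first by rewrite !(mul0r, mulr0); ring.
  have wp := wpos wn0.
  rewrite /r lnV ?posrE ?mulr_gt0 ?(pm_gt0 w0) // lnM ?posrE ?(pm_gt0 w0) //; ring.
have b : \sum_o w o * r o <= 1.
  have -> : \sum_o w o * r o = 2^-1 * \sum_o w o / pm w F (F o).
    rewrite mulr_sumr; apply: eq_bigr => o _; rewrite /r invfM; ring.
  rewrite (bigID (fun o => F o)) /=.
  have e1 : \sum_(o | F o) w o / pm w F (F o) = pm w F true / pm w F true.
    transitivity (\sum_(o | F o) w o / pm w F true).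
      by apply: eq_bigr => o ->.
    rewrite -mulr_suml; congr (_ / _); rewrite /pm big_mkcond /=.
    by apply: eq_bigr => o _; case: (F o); rewrite ?mul1r ?mul0r.
  have e2 : \sum_(o | ~~ F o) w o / pm w F (F o) = pm w F false / pm w F false.
    transitivity (\sum_(o | ~~ F o) w o / pm w F false).
      by apply: eq_bigr => o /negbTE ->.
    rewrite -mulr_suml; congr (_ / _); rewrite /pm big_mkcond /=.
    by apply: eq_bigr => o _; case: (F o); rewrite ?mul1r ?mul0r.
  rewrite e1 e2.
  have := divff_le1 (pm w F true); have := divff_le1 (pm w F false); lra.
have := gibbs w0 w1 pos; lra.
Qed.
End Sub.
Section Couple.
Variable R : realType.
Variable O : finType.
Variable w : O -> R.
Hypothesis w0 : forall o, 0 <= w o.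
Hypothesis w1 : \sum_o w o = 1.
Variable V : eqType.
Variable X : O -> V.

Definition w2 (p : O * O) : R := w p.1 * w p.2 * (X p.1 == X p.2)%:R / pm w X (X p.1).

Lemma w2_ge0 p : 0 <= w2 p.
Proof. by rewrite /w2 divr_ge0 ?mulr_ge0 ?ler0n ?pm_ge0. Qed.

Lemma w_div o : w o / pm w X (X o) * pm w X (X o) = w o.
Proof.
have [e|pn0] := eqVneq (pm w X (X o)) 0; last by rewrite divfK.
have := pm_ge_w w0 X o; rewrite e => h.
have -> : w o = 0 by apply/eqP; rewrite eq_le h w0.
by rewrite !mul0r.
Qed.

Lemma marg1 o1 : \sum_o2 w2 (o1, o2) = w o1.
Proof.
rewrite -[RHS]w_div /pm mulr_sumr; apply: eq_bigr => o2 _.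
by rewrite /w2 /= eq_sym; ring.
Qed.

Lemma marg2 o2 : \sum_o1 w2 (o1, o2) = w o2.
Proof.
rewrite -[RHS]w_div /pm mulr_sumr; apply: eq_bigr => o1 _.
rewrite /w2 /=; case: eqP => [E|_]; last by rewrite !(mulr0, mul0r).
by rewrite E; ring.
Qed.

Lemma sum_fst (h : O -> R) : \sum_p w2 p * h p.1 = \sum_o w o * h o.
Proof.
transitivity (\sum_p w2 (p.1, p.2) * h p.1); first by apply: eq_bigr => -[a b].
rewrite -(pair_bigA _ (fun i j => w2 (i, j) * h i)); apply: eq_bigr => o1 _.
by rewrite -mulr_suml marg1.
Qed.

Lemma sum_snd (h : O -> R) : \sum_p w2 p * h p.2 = \sum_o w o * h o.
Proof.
transitivity (\sum_p w2 (p.1, p.2) * h p.2); first by apply: eq_bigr => -[a b].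
rewrite -(pair_bigA _ (fun i j => w2 (i, j) * h j)) exchange_big; apply: eq_bigr => o2 _.
by rewrite -mulr_suml marg2.
Qed.

Lemma w2_sum1 : \sum_p w2 p = 1.
Proof.
have := sum_fst (fun _ => 1); rewrite /=.
under eq_bigr do rewrite mulr1; under [X in _ = X -> _]eq_bigr do rewrite mulr1.
by rewrite w1.
Qed.

Lemma w2_ge0' : forall p, 0 <= w2 p. Proof. exact: w2_ge0. Qed.

Lemma Hl_fst (V' : eqType) (F : O -> V') : Hl w2 (fun p => F p.1) = Hl w F.
Proof.
have e v : pm w2 (fun p => F p.1) v = pm w F v.
  rewrite /pm; transitivity (\sum_p w2 p * (F p.1 == v)%:R).
    by apply: eq_bigr => p _; rewrite mulrC.
  by rewrite (sum_fst (fun o => (F o == v)%:R)); apply: eq_bigr => o _; rewrite mulrC.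
rewrite /Hl; under eq_bigr do rewrite e.
by rewrite (sum_fst (fun o => ln (pm w F (F o)))).
Qed.

Lemma Hl_snd (V' : eqType) (F : O -> V') : Hl w2 (fun p => F p.2) = Hl w F.
Proof.
have e v : pm w2 (fun p => F p.2) v = pm w F v.
  rewrite /pm; transitivity (\sum_p w2 p * (F p.2 == v)%:R).
    by apply: eq_bigr => p _; rewrite mulrC.
  by rewrite (sum_snd (fun o => (F o == v)%:R)); apply: eq_bigr => o _; rewrite mulrC.
rewrite /Hl; under eq_bigr do rewrite e.
by rewrite (sum_snd (fun o => ln (pm w F (F o)))).
Qed.

Lemma supp p : 0 < w2 p -> X p.1 = X p.2.
Proof.
rewrite /w2; case: eqP => // _; by rewrite mulr0 mul0r ltxx.
Qed.

Lemma supp1 p : 0 < w2 p -> 0 < w p.1.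
Proof.
move=> h; rewrite lt_neqAle w0 andbT; apply/eqP => e.
by move: h; rewrite /w2 -e !mul0r ltxx.
Qed.

Lemma supp2 p : 0 < w2 p -> 0 < w p.2.
Proof.
move=> h; rewrite lt_neqAle w0 andbT; apply/eqP => e.
by move: h; rewrite /w2 -e mulr0 !mul0r ltxx.
Qed.

Lemma pm_T (V2 : eqType) (Y : O -> V2) p : 0 < w2 p ->
  pm w2 (fun q => (X q.1, Y q.1, Y q.2)) (X p.1, Y p.1, Y p.2) =
  pm w (fun o => (X o, Y o)) (X p.1, Y p.1) * pm w (fun o => (X o, Y o)) (X p.2, Y p.2)
    / pm w X (X p.1).
Proof.
move=> hp; have Hs := supp hp.
rewrite /pm.
transitivity (\sum_p0 ((X p0.1, Y p0.1, Y p0.2) == (X p.1, Y p.1, Y p.2))%:R * w2 (p0.1, p0.2)).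
  by apply: eq_bigr => -[a b].
rewrite -(pair_bigA _ (fun i j => ((X i, Y i, Y j) == (X p.1, Y p.1, Y p.2))%:R * w2 (i, j))) /=.
rewrite !mulr_suml; apply: eq_bigr => o1 _.
rewrite mulr_sumr mulr_suml; apply: eq_bigr => o2 _.
rewrite /w2 /= !xpair_eqE.
case: (X o1 =P X p.1) => [E1|N1] /=; last by rewrite !(mul0r, mulr0).
case: (Y o1 =P Y p.1) => [E2|N2] /=; last by rewrite !(mul0r, mulr0).
case: (Y o2 =P Y p.2) => [E3|N3] /=; last by rewrite !(mul0r, mulr0, andbF).
rewrite andbT E1.
have [E4|N4] := eqVneq (X o2) (X p.2).
  by rewrite E4 Hs eqxx; ring.
by rewrite Hs eq_sym (negbTE N4) !(mul0r, mulr0).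
Qed.

Lemma Hl_T (V2 : eqType) (Y : O -> V2) :
  Hl w2 (fun q => (X q.1, Y q.1, Y q.2)) = 2 * Hl w (fun o => (X o, Y o)) - Hl w X.
Proof.
set XY := fun o => (X o, Y o).
have e : \sum_p w2 p * ln (pm w2 (fun q => (X q.1, Y q.1, Y q.2)) (X p.1, Y p.1, Y p.2))
  = \sum_p (w2 p * ln (pm w XY (XY p.1)) + w2 p * ln (pm w XY (XY p.2))
     - w2 p * ln (pm w X (X p.1))).
  apply: eq_bigr => p _.
  have [->|wn0] := eqVneq (w2 p) 0; first by rewrite !mul0r; ring.
  have wp : 0 < w2 p by rewrite lt_neqAle eq_sym wn0 w2_ge0.
  have a1 := pm_gt0 w0 XY (supp1 wp); have a2 := pm_gt0 w0 XY (supp2 wp).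
  have a3 := pm_gt0 w0 X (supp1 wp).
  rewrite pm_T // ln_div ?posrE ?mulr_gt0 // lnM ?posrE //; ring.
rewrite /Hl e sumrB big_split /=.
rewrite (sum_fst (fun o => ln (pm w XY (XY o)))) (sum_snd (fun o => ln (pm w XY (XY o)))).
rewrite (sum_fst (fun o => ln (pm w X (X o)))); ring.
Qed.
End Couple.
Lemma disc (R : realType) (O : finType) (w : O -> R) (a b : O -> R) :
  (forall o, 0 <= w o) -> \sum_o w o = 1 ->
  Hl w (fun o => a o - b o) <= 3 * Hl w (fun o => a o + b o) + 4 * Hl w a
    + 4 * Hl w b - 5 * Hl w (fun o => (a o, b o)).
Proof.
move=> w0 w1.
set W := w2 w a.
have W0 : forall p, 0 <= W p := w2_ge0 w0 a.
have W1 : \sum_p W p = 1 := w2_sum1 w0 w1 a.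
have hx : Hl W (fun p => a p.1) = Hl w a := Hl_fst w0 a a.
have hy1 : Hl W (fun p => b p.1) = Hl w b := Hl_fst w0 a b.
have hy2 : Hl W (fun p => b p.2) = Hl w b := Hl_snd w0 a b.
have hj : Hl W (fun p => (a p.1, b p.1)) = Hl w (fun o => (a o, b o)) :=
  Hl_fst w0 a (fun o => (a o, b o)).
have hd : Hl W (fun p => a p.1 - b p.1) = Hl w (fun o => a o - b o) :=
  Hl_fst w0 a (fun o => a o - b o).
have hs1 : Hl W (fun p => a p.1 + b p.1) = Hl w (fun o => a o + b o) :=
  Hl_fst w0 a (fun o => a o + b o).
have hs2 : Hl W (fun p => a p.1 + b p.2) = Hl w (fun o => a o + b o).
  rewrite -(Hl_snd w0 a (fun o => a o + b o)).
  apply: (Hl_eq_fun W0 (f := id) (g := id)) => p /= hp; by rewrite (supp hp).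
have hT : Hl W (fun p => (a p.1, b p.1, b p.2)) =
    2 * Hl w (fun o => (a o, b o)) - Hl w a := Hl_T w0 a b.
have i1 := @Hl_submod _ _ W W0 W1 _ _ _ (fun p => (a p.1 + b p.2, b p.1 + b p.2))
  (fun p => (a p.1, b p.1)) (fun p => a p.1 - b p.1)
  (fun u => u.1 - u.2) (fun u => u.1 - u.2)
  ltac:(by move=> p /=; ring) ltac:(by move=> p /=).
have i2 : Hl W (fun p => (a p.1, b p.1, b p.2)) <=
    Hl W (fun p => ((a p.1 + b p.2, b p.1 + b p.2), (a p.1, b p.1))).
  apply: (Hl_le_fun W0 (f := fun u : (R * R) * (R * R) => (u.2.1, u.2.2, u.1.2 - u.2.2))).
  by move=> p _ /=; congr (_, _); ring.
have i3 := Hl_subadd W0 W1 (fun p => a p.1 + b p.2) (fun p => b p.1 + b p.2).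
have ii1 := @Hl_submod _ _ W W0 W1 _ _ _ (fun p => (b p.1, a p.1 + b p.2))
  (fun p => (b p.2, a p.1 + b p.1)) (fun p => a p.1 + b p.1 + b p.2)
  (fun u => u.1 + u.2) (fun u => u.1 + u.2)
  ltac:(by move=> p /=; ring) ltac:(by move=> p /=; ring).
have ii2 : Hl W (fun p => (a p.1, b p.1, b p.2)) <=
    Hl W (fun p => ((b p.1, a p.1 + b p.2), (b p.2, a p.1 + b p.1))).
  apply: (Hl_le_fun W0 (f := fun u : (R * R) * (R * R) => (u.1.2 - u.2.1, u.1.1, u.2.1))).
  by move=> p _ /=; congr (_, _, _); ring.
have ii3 := Hl_subadd W0 W1 (fun p => b p.1) (fun p => a p.1 + b p.2).
have ii4 := Hl_subadd W0 W1 (fun p => b p.2) (fun p => a p.1 + b p.1).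
have iii1 := @Hl_submod _ _ W W0 W1 _ _ _ (fun p => (b p.1 + b p.2, a p.1))
  (fun p => (b p.1, b p.2)) (fun p => b p.1 + b p.2)
  (fun u => u.1) (fun u => u.1 + u.2)
  ltac:(by move=> p /=) ltac:(by move=> p /=).
have iii2 : Hl W (fun p => (a p.1, b p.1, b p.2)) <=
    Hl W (fun p => ((b p.1 + b p.2, a p.1), (b p.1, b p.2))).
  apply: (Hl_le_fun W0 (f := fun u : (R * R) * (R * R) => (u.1.2, u.2.1, u.2.2))).
  by move=> p _ /=.
have iii3 : Hl W (fun p => (b p.1 + b p.2, a p.1)) <=
    Hl W (fun p => (a p.1 + b p.1 + b p.2, a p.1)).
  apply: (Hl_le_fun W0 (f := fun u : R * R => (u.1 - u.2, u.2))).
  by move=> p _ /=; congr (_, _); ring.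
have iii4 := Hl_subadd W0 W1 (fun p => a p.1 + b p.1 + b p.2) (fun p => a p.1).
have iii5 := Hl_subadd W0 W1 (fun p => b p.1) (fun p => b p.2).
lra.
Qed.
Local Open Scope classical_set_scope.
Lemma sum_ind_seq (R : realType) (U : eqType) (L : seq U) (x : U) (F : U -> R) :
  uniq L -> x \in L -> \sum_(v <- L) (x == v)%:R * F v = F x.
Proof.
move=> uL xL; rewrite (big_rem x) //= eqxx mul1r big1_seq ?addr0 // => v /andP[_ vr].
have : v != x by apply: contraTneq vr => ->; rewrite mem_rem_uniqF.
by rewrite eq_sym => /negbTE ->; rewrite mul0r.
Qed.

Section Transfer.
Variables (R : realType) (d : measure_display) (T : measurableType d) (P : probability T R).
Variables (U : choiceType) (Wf : T -> U) (S : seq U) (u0 : U).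
Hypotheses (uS : uniq S) (inS : forall t, Wf t \in S)
  (onS : forall u, u \in S -> exists t, Wf t = u)
  (mW : forall u, measurable (Wf @^-1` [set u])).

Definition wt (o : 'I_(size S)) : R := Defs.pmf P Wf (nth u0 S o).

Lemma wt_E (o : 'I_(size S)) : P (Wf @^-1` [set nth u0 S o]) = (wt o)%:E.
Proof. by rewrite /wt /Defs.pmf fineK // fin_num_measure. Qed.

Lemma pmf_trans (V : eqType) (g : U -> V) (Z : T -> V) :
  (forall t, Z t = g (Wf t)) -> forall v,
  Defs.pmf P Z v = pm wt (fun o => g (nth u0 S o)) v.
Proof.
move=> hZ v.
have eZ : Z @^-1` [set v] = \big[setU/set0]_(i < size S | g (nth u0 S i) == v)
    (Wf @^-1` [set nth u0 S i]).
  rewrite -bigcup_seq_cond; apply/seteqP; split => t /=.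
  - move=> Zt; exists (Ordinal (etrans (index_mem (Wf t) S) (inS t))).
      by rewrite /= mem_index_enum /= nth_index // -hZ Zt eqxx.
    by rewrite /= nth_index.
  - by move=> [i /andP[_ /eqP <-] /= <-]; rewrite hZ.
rewrite /Defs.pmf eZ measure_bigsetU_ord_cond //.
- rewrite (eq_bigr (fun i => (wt i)%:E)); last by move=> i _; exact: wt_E.
  rewrite sumEFin /= /pm big_mkcond /=.
  by apply: eq_bigr => i _; rewrite eq_sym; case: eqP; rewrite ?mul1r ?mul0r.
- move=> i j _ _ [t [/= ti tj]].
  by apply/val_inj/eqP; rewrite -(nth_uniq u0 _ _ uS) ?ltn_ord // -ti -tj.
Qed.

Lemma wt_ge0 (o : 'I_(size S)) : 0 <= wt o.
Proof. by rewrite /wt /Defs.pmf fine_ge0. Qed.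

Lemma wt_sum1 : \sum_o wt o = 1.
Proof.
have := pmf_trans (g := fun _ => tt) (Z := fun _ => tt) (fun _ => erefl) tt.
rewrite /Defs.pmf /pm preimage_cst /= ifT; last by rewrite inE.
have -> : P [set: T] = 1%E by exact: probability_setT.
move=> /= ->; by apply: eq_bigr => o _; rewrite mul1r.
Qed.

Lemma ent_trans (V : choiceType) (g : U -> V) (Z : T -> V) :
  (forall t, Z t = g (Wf t)) ->
  entropy P Z = Hl wt (fun o => g (nth u0 S o)) / ln 2.
Proof.
move=> hZ.
have fin : finite_set (range Z).
  apply: (@sub_finite_set _ _ (g @` [set` S])); last exact/finite_image/finite_seq.
  move=> _ [t _ <-]; exists (Wf t); first exact: inS.
  by rewrite hZ.
set G := fun o : 'I_(size S) => g (nth u0 S o).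
rewrite /entropy fsbig_finite //.
have hp := pmf_trans hZ.
under eq_bigr do rewrite hp.

have -> : \sum_(v <- finmap.enum_fset (fset_set (range Z))) pm wt G v * log2 (pm wt G v) = \sum_o wt o * log2 (pm wt G (G o)).
  transitivity (\sum_(v <- finmap.enum_fset (fset_set (range Z))) \sum_o (G o == v)%:R * (wt o * log2 (pm wt G v))).
    apply: eq_bigr => v _; rewrite {1}/pm mulr_suml; apply: eq_bigr => o _.
    by rewrite mulrA.
  rewrite exchange_big; apply: eq_bigr => o _.
  apply: sum_ind_seq; first exact: finmap.fset_uniq.
  rewrite in_fset_set // inE.
  have [t ht] := onS (mem_nth u0 (ltn_ord o)).
  by exists t => //; rewrite hZ ht.
rewrite /Hl /log2 mulNr mulr_suml; congr (- _); apply: eq_bigr => o _.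
by rewrite mulrA.
Qed.
End Transfer.
Lemma rounding (R : realType) (O : finType) (w : O -> R) (a b s dd : O -> R) (c : R) :
  (forall o, 0 <= w o) -> \sum_o w o = 1 ->
  (forall o, dd o = a o - b o \/ dd o = a o - b o - c) ->
  (forall o, s o = a o + b o \/ s o = a o + b o + c) ->
  Hl w dd <= 3 * Hl w s + 4 * Hl w a + 4 * Hl w b - 5 * Hl w (fun o => (a o, b o)) + 4 * ln 2.
Proof.
move=> w0 w1 hd hs.
have h1 : Hl w dd <= Hl w (fun o => (a o - b o, dd o == a o - b o)).
  apply: (Hl_le_fun w0 (f := fun u : R * bool => if u.2 then u.1 else u.1 - c)).
  move=> o _ /=; case: eqP => // ne; by case: (hd o).
have h2 := Hl_subadd w0 w1 (fun o => a o - b o) (fun o => dd o == a o - b o).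
have h3 := Hl_bool w0 w1 (fun o => dd o == a o - b o).
have h4 : Hl w (fun o => a o + b o) <= Hl w (fun o => (s o, s o == a o + b o)).
  apply: (Hl_le_fun w0 (f := fun u : R * bool => if u.2 then u.1 else u.1 - c)).
  move=> o _ /=; case: eqP => [->//|ne]; case: (hs o) => // ->; ring.
have h5 := Hl_subadd w0 w1 s (fun o => s o == a o + b o).
have h6 := Hl_bool w0 w1 (fun o => s o == a o + b o).
have h7 := disc a b w0 w1.
lra.
Qed.

Lemma dyadic_sub (R : realType) n (x y : R) :
  dyadic n (x - y) = dyadic n x - dyadic n y \/
  dyadic n (x - y) = dyadic n x - dyadic n y - (2 ^+ n)^-1.
Proof.
rewrite /dyadic.
set u := 2 ^+ n * x; set v := 2 ^+ n * y.
have -> : 2 ^+ n * (x - y) = u - v by rewrite /u /v mulrBr.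
have hu := floor_itv u; have hv := floor_itv v.
set fu := Num.floor u in hu *; set fv := Num.floor v in hv *.
move: hu hv; rewrite !intrD => /andP[hu1 hu2] /andP[hv1 hv2].
have [le|lt] := leP ((fu - fv)%:~R) (u - v).
  left; rewrite (@floor_def _ _ (fu - fv)); last first.
    by rewrite le /= ?intrD ?intrB ?intrN; lra.
  by rewrite ?intrD ?intrB ?intrN mulrDl mulNr.
right; rewrite (@floor_def _ _ (fu - fv - 1)); last first.
  by move: lt; rewrite ?intrD ?intrB ?intrN; lra.
by rewrite ?intrD ?intrB ?intrN !mulrDl !mulNr mul1r.
Qed.

Lemma dyadic_add (R : realType) n (x y : R) :
  dyadic n (x + y) = dyadic n x + dyadic n y \/
  dyadic n (x + y) = dyadic n x + dyadic n y + (2 ^+ n)^-1.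
Proof.
rewrite /dyadic.
set u := 2 ^+ n * x; set v := 2 ^+ n * y.
have -> : 2 ^+ n * (x + y) = u + v by rewrite /u /v mulrDr.
have hu := floor_itv u; have hv := floor_itv v.
set fu := Num.floor u in hu *; set fv := Num.floor v in hv *.
move: hu hv; rewrite !intrD => /andP[hu1 hu2] /andP[hv1 hv2].
have [lt|le] := ltP (u + v) ((fu + fv + 1)%:~R).
  left; rewrite (@floor_def _ _ (fu + fv)); last first.
    by move: lt; rewrite !intrD; lra.
  by rewrite intrD mulrDl.
right; rewrite (@floor_def _ _ (fu + fv + 1)); last first.
  by move: le; rewrite !intrD; lra.
by rewrite !intrD !mulrDl mul1r.
Qed.
From mathcomp Require Import zify.
Local Open Scope classical_set_scope.

Lemma dyadic_meas (R : realType) (d : measure_display) (T : measurableType d)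
  (Z : T -> R) n (u : R) : measurable_fun setT Z ->
  measurable [set t | dyadic n (Z t) = u].
Proof.
move=> mZ.
have mZ2 : measurable_fun setT (fun t => 2 ^+ n * Z t).
  exact: (measurable_realfun.measurable_funM (measurable_cst (2 ^+ n : R)) mZ).
set k0 := Num.floor (2 ^+ n * u).
have n0 : (2 ^+ n : R) != 0 by rewrite expf_neq0 // pnatr_eq0.
have -> : [set t | dyadic n (Z t) = u] =
    (fun t => 2 ^+ n * Z t) @^-1` `[(k0%:~R : R), (k0 + 1)%:~R[%classic
    `&` [set _ | u = k0%:~R / 2 ^+ n].
  apply/seteqP; split => t /=.
  - move=> hu.
    have e : k0 = Num.floor (2 ^+ n * Z t).
      by rewrite /k0 -hu /dyadic [2 ^+ n * _]mulrC divfK // intrKfloor.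
    split; first by rewrite in_itv /= e floor_itv.
    by rewrite -hu e.
  - rewrite in_itv /= => -[hk ->]; rewrite /dyadic.
    by rewrite (@floor_def _ _ k0).
apply: measurableI.
  rewrite -[X in measurable X]setTI; apply: mZ2 => //; exact: measurable_itv.
have [h|h] := pselect (u = k0%:~R / 2 ^+ n).
  by have -> : [set _ : T | u = k0%:~R / 2 ^+ n] = setT by apply/seteqP; split.
by have -> : [set _ : T | u = k0%:~R / 2 ^+ n] = set0 by apply/seteqP; split.
Qed.

Lemma dyadic_fin (R : realType) (T : Type) (Z : T -> R) n (M : R) :
  (forall t, `|Z t| <= M) -> finite_set (range (fun t => dyadic n (Z t))).
Proof.
move=> hZ.
set m := Num.floor (2 ^+ n * M).
set N : nat := (`|m|%N).+1.
apply: (@sub_finite_set _ _ ((fun k : int => k%:~R / 2 ^+ n) @`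
    [set` [seq (i%:Z - N%:Z) | i <- iota 0 (N + N).+1]])); last first.
  exact/finite_image/finite_seq.
move=> _ [t _ <-]; exists (Num.floor (2 ^+ n * Z t)) => //.
have p2 : (0 : R) <= 2 ^+ n by rewrite exprn_ge0.
have M0 : 0 <= M by apply: le_trans (hZ t).
have hm := floor_itv (2 ^+ n * M); rewrite -/m in hm.
have m0 : 0 <= m by rewrite /m floor_ge0 mulr_ge0.
have up : Num.floor (2 ^+ n * Z t) <= m.
  apply: le_floor; apply: ler_wpM2l => //; exact: le_trans (ler_norm _) (hZ t).
have lo : - m - 1 <= Num.floor (2 ^+ n * Z t).
  rewrite floor_ge_int.
  have : - M <= Z t by have := hZ t; rewrite ler_norml => /andP[].
  move=> h; have : - (2 ^+ n * M) <= 2 ^+ n * Z t by rewrite -mulrN ler_wpM2l.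
  move: hm; rewrite ?intrD ?intrN ?intrB => /andP[_ hm2]; lra.
set k := Num.floor (2 ^+ n * Z t) in up lo *.
change (k \in [seq ((i%:Z - N%:Z)%R : int) | i <- iota 0 (N + N).+1]).
apply/mapP; exists (absz (k + N%:Z)%R).
  rewrite mem_iota /= add0n; lia.
lia.
Qed.
Local Open Scope classical_set_scope.
Theorem mainTheorem8 (R : realType) :
  exists K : R,
  forall (d : measure_display) (T : measurableType d) (P : probability T R)
         (X Y : T -> R),
    measurable_fun setT X -> measurable_fun setT Y ->
    (exists M : R, forall t, `|X t| <= M) ->
    (exists M : R, forall t, `|Y t| <= M) ->
    forall n : nat,
      Hn P n (fun t => X t - Y t)
      <= 3 * Hn P n (fun t => X t + Y t) + 4 * Hn P n X + 4 * Hn P n Y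
         - 5 * Hn2 P n X Y + K.
Proof.
exists 4 => d T P X Y mX mY [MX hX] [MY hY] n.
pose Wf := fun t => (dyadic n (X t), dyadic n (Y t), dyadic n (X t + Y t), dyadic n (X t - Y t)).
have hXY : forall t, `|X t + Y t| <= MX + MY.
  by move=> t; apply: le_trans (ler_normD _ _) _; apply: lerD.
have hXmY : forall t, `|X t - Y t| <= MX + MY.
  by move=> t; apply: le_trans (ler_normB _ _) _; apply: lerD.
have finW : finite_set (range Wf).
  apply: (@sub_finite_set _ _ (((range (fun t => dyadic n (X t)) `*`
      range (fun t => dyadic n (Y t))) `*` range (fun t => dyadic n (X t + Y t))) `*`
      range (fun t => dyadic n (X t - Y t)))).
    by move=> _ [t _ <-]; split; [split; [split|]|]; exists t.
  apply: finite_setX; [apply: finite_setX; [apply: finite_setX|]|].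
  - exact: dyadic_fin hX.
  - exact: dyadic_fin hY.
  - exact: dyadic_fin hXY.
  - exact: dyadic_fin hXmY.
have [s hs] := (finite_seqP _).1 finW.
pose S := undup s.
have uS : uniq S := undup_uniq s.
have inS : forall t, Wf t \in S.
  move=> t; rewrite mem_undup.
  have : range Wf (Wf t) by exists t.
  by rewrite hs.
have onS : forall u, u \in S -> exists t, Wf t = u.
  move=> u; rewrite mem_undup => us.
  have : range Wf u by rewrite hs.
  by case=> t _ <-; exists t.
have mW : forall u, measurable (Wf @^-1` [set u]).
  move=> [[[u1 u2] u3] u4].
  have -> : Wf @^-1` [set (u1, u2, u3, u4)] =
    [set t | dyadic n (X t) = u1] `&` [set t | dyadic n (Y t) = u2] `&`
    [set t | dyadic n (X t + Y t) = u3] `&` [set t | dyadic n (X t - Y t) = u4].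
    apply/seteqP; split => t /=.
      by rewrite /Wf => -[<- <- <- <-]; split; [split; [split|]|].
    by rewrite /Wf => -[[[-> ->] ->] ->].
  have mXY : measurable_fun setT (fun t => X t + Y t).
    exact: measurable_realfun.measurable_funD.
  have mXmY : measurable_fun setT (fun t => X t - Y t).
    exact: measurable_realfun.measurable_funB.
  by repeat apply: measurableI; apply: dyadic_meas.
pose u0 : R * R * R * R := (0, 0, 0, 0).
pose w := wt P Wf (S := S) u0.
have w0 : forall o, 0 <= w o := wt_ge0 P Wf (S := S) u0.
have w1 : \sum_o w o = 1 := wt_sum1 P u0 uS inS mW.
have eA : Hn P n X = Hl w (fun o => (nth u0 S o).1.1.1) / ln 2 :=
  ent_trans P u0 uS inS onS mW (g := fun u => u.1.1.1) (fun t => erefl).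
have eB : Hn P n Y = Hl w (fun o => (nth u0 S o).1.1.2) / ln 2 :=
  ent_trans P u0 uS inS onS mW (g := fun u => u.1.1.2) (fun t => erefl).
have eS : Hn P n (fun t => X t + Y t) = Hl w (fun o => (nth u0 S o).1.2) / ln 2 :=
  ent_trans P u0 uS inS onS mW (g := fun u => u.1.2) (fun t => erefl).
have eD : Hn P n (fun t => X t - Y t) = Hl w (fun o => (nth u0 S o).2) / ln 2 :=
  ent_trans P u0 uS inS onS mW (g := fun u => u.2) (fun t => erefl).
have eJ : Hn2 P n X Y = Hl w (fun o => ((nth u0 S o).1.1.1, (nth u0 S o).1.1.2)) / ln 2 :=
  ent_trans P u0 uS inS onS mW (g := fun u => (u.1.1.1, u.1.1.2)) (fun t => erefl).
have key := rounding (a := fun o : 'I_(size S) => (nth u0 S o).1.1.1) (b := fun o : 'I_(size S) => (nth u0 S o).1.1.2)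
  (s := fun o : 'I_(size S) => (nth u0 S o).1.2) (dd := fun o : 'I_(size S) => (nth u0 S o).2) (c := (2 ^+ n)^-1) w0 w1
  ltac:(move=> o; have [t <-] := onS _ (mem_nth u0 (ltn_ord o)); exact: dyadic_sub)
  ltac:(move=> o; have [t <-] := onS _ (mem_nth u0 (ltn_ord o)); exact: dyadic_add).
rewrite eA eB eS eD eJ.
have l2 : 0 < ln (2 : R) by rewrite ln_gt0 // ltr1n.
move: key.
set hA' := Hl w (fun o => (nth u0 S o).1.1.1).
set hB' := Hl w (fun o => (nth u0 S o).1.1.2).
set hS' := Hl w (fun o => (nth u0 S o).1.2).
set hD' := Hl w (fun o => (nth u0 S o).2).
set hJ' := Hl w (fun o => ((nth u0 S o).1.1.1, (nth u0 S o).1.1.2)).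
move=> key.
have -> : 3 * (hS' / ln 2) + 4 * (hA' / ln 2) + 4 * (hB' / ln 2) - 5 * (hJ' / ln 2) + 4
  = (3 * hS' + 4 * hA' + 4 * hB' - 5 * hJ' + 4 * ln 2) / ln 2.
  by field; rewrite gt_eqF.
apply: ler_wpM2r; [by rewrite invr_ge0 ltW | exact: key].
Qed.
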